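(* Let $m\ge 1$ be an integer, $\Gamma_1,\Gamma_2$ co-prime integers with $1<\Gamma_1<\Gamma_2$, $m_1=m\Gamma_1$, $m_2=m\Gamma_2$, and $\sigma_1=|\Gamma_2|_{\Gamma_1}\ge 2$. Let $N$ be an integer with $0\le N< m_1\left(1+\lfloor m_2/m_1\rfloor\lfloor m_1/|m_2|_{m_1}\rfloor\right)$, with remainders $r_i=|N|_{m_i}$, and let $\tilde r_1,\tilde r_2$ be erroneous remainders whose errors $\Delta r_i=\tilde r_i-r_i$ satisfy $$-\frac{\sigma_1}{2}\le \frac{\Delta r_1-\Delta r_2}{m}<\frac{\sigma_1}{2}.$$ Let $\mathbf q_{21}=(\tilde r_1-\tilde r_2)/m$. Then: (1) if $\mathbf q_{21}\ge \sigma_1/2$, then $r_1>r_2$; (2) if $\mathbf q_{21}<-\sigma_1/2$, then $r_1<r_2$; (3) if $-\sigma_1/2\le \mathbf q_{21}<\sigma_1/2$, then $r_1=r_2$.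
   Context: $|a|_b$ denotes the remainder of the integer $a$ modulo the positive integer $b$ (in $[0,b)$). Erroneous remainders are integers $\tilde r_i$ with $0\le \tilde r_i<m_i$. *)

(* Defs.v *)
From HB Require Import structures.
From mathcomp Require Import all_boot all_order all_algebra.
Set Implicit Arguments. Unset Strict Implicit. Unset Printing Implicit Defensive.

(* Main.v *)
Require Import Defs.
From HB Require Import structures.
From mathcomp Require Import all_boot all_order all_algebra.
From mathcomp Require Import zify ring lra.
Import Order.TTheory GRing.Theory Num.Theory.

Lemma key (m G1 G2 N q s t k1 k2 r1 r2 : nat) :
  N = k1*(m*G1) + r1 -> N = k2*(m*G2) + r2 -> G2 = q*G1 + s ->
  (k1 <= q*t)%N -> (q*k2 <= k1)%N -> (t*s <= G1)%N -> (1 <= q)%N ->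
  r1 = r2 \/ (r2 + m * s <= r1)%N \/ (r1 + m * s <= r2)%N.
Proof.
move=> E1 E2 E3 H1 H2 H3 H4.
have [j Hj]: exists j, k1 = q*k2 + j by exists (k1 - q*k2); lia.
subst k1 G2.
case: j E1 H1 H2 => [|j] E1 H1 H2.
  have E: r1 = r2 + k2 * m * s by nia.
  case: (posnP k2) => Hk2; [left; subst k2; lia | right; left; nia].
right; right.
have Hk: (k2 < t)%N.
  have : (q*k2 < q*t)%N by lia.
  by rewrite ltn_pmul2l.
have : (k2.+1 * s <= G1)%N by apply: leq_trans H3; rewrite leq_mul2r Hk orbT.
move=> H5.
have : (m * (k2.+1 * s) <= m * ((j.+1) * G1))%N.
  by rewrite leq_mul2l; apply/orP; right; apply: leq_trans H5 _; rewrite leq_pmull.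
nia.
Qed.

Theorem lemma2 (m G1 G2 N rt1 rt2 : nat) :
  (1 <= m)%N -> coprime G1 G2 -> (1 < G1)%N -> (G1 < G2)%N ->
  (2 <= G2 %% G1)%N ->
  (N < (m * G1) * (1 + ((m * G2) %/ (m * G1)) * ((m * G1) %/ ((m * G2) %% (m * G1)))))%N ->
  (rt1 < m * G1)%N -> (rt2 < m * G2)%N ->
  let r1 := (N %% (m * G1))%N in
  let r2 := (N %% (m * G2))%N in
  let sigma1 : rat := ((G2 %% G1)%N%:R)%R in
  let dr1 : rat := (rt1%:R - r1%:R)%R in
  let dr2 : rat := (rt2%:R - r2%:R)%R in
  let q21 : rat := ((rt1%:R - rt2%:R) / m%:R)%R in
  (- (sigma1 / 2%:R) <= (dr1 - dr2) / m%:R < sigma1 / 2%:R)%R ->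
  [/\ (sigma1 / 2%:R <= q21)%R -> (r1 > r2)%N,
      (q21 < - (sigma1 / 2%:R))%R -> (r1 < r2)%N &
      (- (sigma1 / 2%:R) <= q21 < sigma1 / 2%:R)%R -> r1 = r2].

Proof.
move=> m1 cop G1gt G12 s2 HN rt1lt rt2lt r1 r2 sigma1 dr1 dr2 q21 He.
have m0 : (0 < m)%N by [].
set q := (G2 %/ G1)%N. set s := (G2 %% G1)%N. set t := (G1 %/ s)%N.
set k1 := (N %/ (m * G1))%N. set k2 := (N %/ (m * G2))%N.
have HN' : (N < (m * G1) * (1 + q * t))%N.
  have e1 : ((m * G2) %/ (m * G1) = q)%N by rewrite divnMl.
  have e2 : ((m * G1) %/ ((m * G2) %% (m * G1)) = t)%N by rewrite -muln_modr divnMl.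
  by rewrite -e1 -e2.
have H1 : (k1 <= q * t)%N.
  have pos : (0 < m * G1)%N by rewrite muln_gt0 m0; lia.
  have : (k1 < 1 + q * t)%N by rewrite /k1 ltn_divLR // mulnC.
  lia.
have H2 : (q * k2 <= k1)%N.
  rewrite leq_divRL; last by rewrite muln_gt0 m0; lia.
  have A1 : (k2 * (m * G2) <= N)%N by exact: leq_divM.
  have A2 : (q * G1 <= G2)%N by exact: leq_divM.
  have A3 : (q * k2 * (m * G1) <= k2 * (m * G2))%N.
    have : (m * k2 * (q * G1) <= m * k2 * G2)%N by rewrite leq_mul2l A2 orbT.
    by rewrite (mulnC q k2) -!mulnA (mulnCA q m G1) (mulnCA k2 m) (mulnCA k2 m G2).
  exact: leq_trans A3 A1.
have H3 : (t * s <= G1)%N by exact: leq_divM.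
have H4 : (1 <= q)%N by rewrite divn_gt0; lia.
have K := @key m G1 G2 N q s t k1 k2 r1 r2 (divn_eq N (m*G1)) (divn_eq N (m*G2))
  (divn_eq G2 G1) H1 H2 H3 H4.
have mR : (0 < m%:R :> rat)%R by rewrite ltr0n.
have mR0 : (m%:R != 0 :> rat)%R by rewrite lt0r_neq0.
set e := ((dr1 - dr2) / m%:R)%R in He.
set a : rat := ((r1%:R - r2%:R) / m%:R)%R.
have Eq : q21 = (a + e)%R.
  rewrite /q21 /a /e /dr1 /dr2; field; exact: mR0.
have s0 : (0 <= sigma1)%R by rewrite ler0n.
case/andP: He => He1 He2.
rewrite Eq.
have ms : (0 < m * s)%N by rewrite muln_gt0 m0 /= (leq_trans _ s2).
case: K => [E|[E|E]].
- have a0 : a = 0%R by rewrite /a E subrr mul0r.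
  rewrite a0; split => Hq; first by exfalso; lra.
    by exfalso; lra.
  by [].
- have Ha : (sigma1 <= a)%R.
    rewrite /a ler_pdivlMr // lerBrDr.
    move: E; rewrite -(ler_nat rat) natrD natrM /sigma1 => E; lra.
  have Hr : (r2 < r1)%N by rewrite (leq_trans _ E) // -addn1 leq_add2l.
  split => Hq; [exact: Hr | exfalso; lra | exfalso; case/andP: Hq; lra].
- have Ha : (a <= - sigma1)%R.
    rewrite /a ler_pdivrMr //.
    move: E; rewrite -(ler_nat rat) natrD natrM /sigma1 => E; lra.
  have Hr : (r1 < r2)%N by rewrite (leq_trans _ E) // -addn1 leq_add2l.
  split => Hq; [exfalso; lra | exact: Hr | exfalso; case/andP: Hq; lra].
Qed.
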